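(* Let $m \geq 1$ be an integer and define $F(m,p) = \mathbb{P}_{X\sim B(m,p)}[X \geq mp] = \sum_{j=\lceil mp\rceil}^{m} \binom{m}{j} p^j (1-p)^{m-j}$ for $p \in [0,1]$. Then for every $k \in \{1, \ldots, m\}$, the function $p \mapsto F(m,p)$ is strictly increasing on the interval $\left(\frac{k-1}{m}, \frac{k}{m}\right]$.
   Context: $B(m,p)$ denotes the binomial distribution with $m$ trials and success probability $p$: $\mathbb{P}[X=j]=\binom{m}{j}p^j(1-p)^{m-j}$ for $j=0,\dots,m$; its mean is $mp$. *)

(* Defs.v *)
From Stdlib Require Import Reals Lra Lia.
Open Scope R_scope.

Definition binom_pmf (m j : nat) (p : R) : R :=
  C m j * p ^ j * (1 - p) ^ (m - j).

Definition F (m : nat) (p : R) : R :=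
  sum_f_R0 (fun j => if Rle_dec (INR m * p) (INR j) then binom_pmf m j p else 0) m.

(* Main.v *)
Require Import Defs.
From Stdlib Require Import Reals Lra Lia FunctionalExtensionality.
Open Scope R_scope.

Definition dbin (m j : nat) (x : R) : R :=
  C m j * (INR j * x^(pred j) * (1-x)^(m-j) + x^j * (INR (m-j) * (1-x)^(pred (m-j)) * (-1))).

Lemma db_lim m j x : derivable_pt_lim (fun p => binom_pmf m j p) x (dbin m j x).
Proof.
  assert (E : (fun p => binom_pmf m j p) =
    mult_real_fct (C m j) (mult_fct (fun y => y^j) (comp (fun y => y^(m-j)) (fun y => 1 - y)))).
  { apply functional_extensionality; intro p. unfold binom_pmf, mult_real_fct, mult_fct, comp. ring. }
  rewrite E. unfold dbin. apply derivable_pt_lim_scal.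
  apply derivable_pt_lim_mult. apply derivable_pt_lim_pow.
  apply derivable_pt_lim_comp.
  - replace (-1) with (0 - 1) by ring. apply (derivable_pt_lim_minus (fct_cte 1) id).
    apply derivable_pt_lim_const. apply derivable_pt_lim_id.
  - apply derivable_pt_lim_pow.
Qed.

Definition G m k p := sum_f_R0 (fun j => if Nat.leb k j then binom_pmf m j p else 0) m.
Definition DG m k p := sum_f_R0 (fun j => if Nat.leb k j then dbin m j p else 0) m.

Lemma sum_lim (f df : nat -> R -> R) x n :
  (forall j, derivable_pt_lim (f j) x (df j x)) ->
  derivable_pt_lim (fun p => sum_f_R0 (fun j => f j p) n) x (sum_f_R0 (fun j => df j x) n).
Proof.
  intro H. induction n as [|n IH]; simpl. apply H.
  apply (derivable_pt_lim_plus (fun p => sum_f_R0 (fun j => f j p) n) (f (S n))); auto.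
Qed.

Lemma G_lim m k x : derivable_pt_lim (G m k) x (DG m k x).
Proof.
  unfold G, DG.
  apply (sum_lim (fun j p => if Nat.leb k j then binom_pmf m j p else 0)
                 (fun j p => if Nat.leb k j then dbin m j p else 0)).
  intro j. destruct (Nat.leb k j). apply db_lim.
  apply (derivable_pt_lim_const 0).
Qed.

Definition aa m i x := C m i * INR (m - i) * x^i * (1-x)^(m - S i).

Lemma C_id m i : (i < m)%nat -> C m (S i) * INR (S i) = C m i * INR (m - i).
Proof.
  intro H. destruct (m - i)%nat as [|d] eqn:Ed; [lia|].
  assert (m - S i = d)%nat by lia.
  unfold C. rewrite Ed, H0. 
  replace (Factorial.fact (S i)) with (S i * Factorial.fact i)%nat by reflexivity.
  replace (Factorial.fact (S d)) with (S d * Factorial.fact d)%nat by reflexivity.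
  rewrite !mult_INR.
  assert (INR (Factorial.fact i) <> 0) by apply INR_fact_neq_0.
  assert (INR (Factorial.fact d) <> 0) by apply INR_fact_neq_0.
  assert (INR (S i) <> 0) by (apply not_0_INR; lia).
  assert (INR (S d) <> 0) by (apply not_0_INR; lia).
  field. auto.
Qed.

Lemma dbin_tel m i x : (i < m)%nat -> dbin m (S i) x = aa m i x - aa m (S i) x.
Proof.
  intro H. unfold dbin, aa. simpl pred.
  destruct (m - S i)%nat as [|d] eqn:Ed.
  - assert (m - i = 1)%nat by lia. rewrite H0.
    replace (C m (S i) * (INR (S i) * x ^ i * (1 - x) ^ 0 + x ^ S i * (INR 0 * (1 - x) ^ pred 0 * -1)))
      with (C m (S i) * INR (S i) * x^i) by (simpl; ring).
    rewrite C_id by lia. rewrite H0. simpl. ring.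
  - assert (m - i = S (S d))%nat by lia.
    replace (m - S (S i))%nat with d by lia. simpl pred.
    replace (C m (S i) * (INR (S i) * x ^ i * (1 - x) ^ S d + x ^ S i * (INR (S d) * (1 - x) ^ d * -1)))
      with (C m (S i) * INR (S i) * x^i * (1-x)^ S d - C m (S i) * INR (S d) * x^ S i * (1-x)^d) by ring.
    rewrite C_id by lia. rewrite H0. ring.
Qed.

Lemma DG_zero m k x n : (n < k)%nat ->
  sum_f_R0 (fun j => if Nat.leb k j then dbin m j x else 0) n = 0.
Proof.
  induction n; intro H; simpl.
  - destruct (Nat.leb_spec k 0); [lia|reflexivity].
  - rewrite IHn by lia. destruct (Nat.leb_spec k (S n)); [lia|ring].
Qed.

Lemma DG_tel m k x n : (1 <= k)%nat -> (k - 1 <= n)%nat -> (n <= m)%nat ->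
  sum_f_R0 (fun j => if Nat.leb k j then dbin m j x else 0) n = aa m (k-1) x - aa m n x.
Proof.
  intros Hk. induction n; intros H1 H2.
  - rewrite DG_zero by lia. replace (k-1)%nat with 0%nat by lia. ring.
  - destruct (Nat.eq_dec (k-1) (S n)).
    + rewrite DG_zero by lia. rewrite e. ring.
    + simpl. rewrite IHn by lia. destruct (Nat.leb_spec k (S n)); [|lia].
      rewrite dbin_tel by lia. ring.
Qed.

Lemma C_pos n i : 0 < C n i.
Proof.
  unfold C. apply Rdiv_lt_0_compat. apply lt_0_INR, Factorial.lt_O_fact.
  apply Rmult_lt_0_compat; apply lt_0_INR, Factorial.lt_O_fact.
Qed.

Lemma DG_pos m k x : (1 <= k)%nat -> (k <= m)%nat -> 0 < x < 1 -> 0 < DG m k x.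
Proof.
  intros H1 H2 Hx. unfold DG. rewrite DG_tel by lia.
  unfold aa. replace (m - m)%nat with 0%nat by lia. simpl INR.
  rewrite !Rmult_0_r, !Rmult_0_l, Rminus_0_r.
  apply Rmult_lt_0_compat. apply Rmult_lt_0_compat. apply Rmult_lt_0_compat.
  apply C_pos. apply lt_0_INR; lia. apply pow_lt; lra. apply pow_lt; lra.
Qed.

Theorem mainTheorem3 (m : nat) (Hm : (1 <= m)%nat) (k : nat)
  (Hk1 : (1 <= k)%nat) (Hkm : (k <= m)%nat) :
  forall p q : R,
    (INR k - 1) / INR m < p -> p < q -> q <= INR k / INR m ->
    F m p < F m q.
Proof.
  intros p q Hp Hpq Hq.
  assert (Hm0 : 0 < INR m) by (apply lt_0_INR; lia).
  assert (Hk : 1 <= INR k) by (replace 1 with (INR 1) by reflexivity; apply le_INR; lia).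
  assert (Hkm' : INR k <= INR m) by (apply le_INR; lia).
  assert (conv : forall r, (INR k - 1) / INR m < r -> r <= INR k / INR m -> F m r = G m k r).
  { intros r H1 H2. unfold F, G. apply sum_eq. intros j _.
    assert (H1' : INR k - 1 < INR m * r).
    { apply (Rmult_lt_compat_l (INR m)) in H1; auto.
      replace (INR m * ((INR k - 1) / INR m)) with (INR k - 1) in H1 by (field; lra). exact H1. }
    assert (H2' : INR m * r <= INR k).
    { apply (Rmult_le_compat_l (INR m)) in H2; [|lra].
      replace (INR m * (INR k / INR m)) with (INR k) in H2 by (field; lra). exact H2. }
    destruct (Nat.leb_spec k j) as [Hj|Hj];
      destruct (Rle_dec (INR m * r) (INR j)) as [Hr|Hr]; auto.
    - exfalso. apply Hr. apply le_INR in Hj. lra.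
    - exfalso. assert (INR (S j) <= INR k) by (apply le_INR; lia). rewrite S_INR in H. lra. }
  rewrite !conv; auto; try lra.
  set (pr := fun x => exist (fun l => derivable_pt_lim (G m k) x l) (DG m k x) (G_lim m k x) : derivable_pt (G m k) x).
  apply (derive_increasing_interv ((INR k - 1) / INR m) (INR k / INR m) (G m k) pr).
  - apply Rmult_lt_compat_r. apply Rinv_0_lt_compat; auto. lra.
  - intros t Ht. unfold derive_pt, pr. simpl. apply DG_pos; auto.
    split.
    + apply Rle_lt_trans with ((INR k - 1) / INR m); [|lra].
      unfold Rdiv. apply Rmult_le_pos. lra. apply Rlt_le, Rinv_0_lt_compat; lra.
    + apply Rlt_le_trans with (INR k / INR m); [lra|].
      replace 1 with (INR m / INR m) by (field; lra). unfold Rdiv. apply Rmult_le_compat_r; [apply Rlt_le, Rinv_0_lt_compat|]; lra.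
  - lra.
  - lra.
  - exact Hpq.
Qed.
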